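(* Let $N\ge2$ and let $q$ be a primitive $4N$-th root of unity with $q^N=\mathbf{i}$. Then: (a) $q_\lambda\neq0$ for every strict partition $\lambda$ with $\lambda_1<N$, and $q_\lambda=0$ for every strict partition $\lambda$ with $\lambda_1=N+1$ and $\lambda_2\le N-2$; (b) $a_{N-m}=a_m$ for $0\le m\le N$, where $a_0=1$; (c) $q_{(N,\lambda_2,\dots,\lambda_r)}=q_{(\lambda_2,\dots,\lambda_r)}$ for any strict partition $(N,\lambda_2,\dots,\lambda_r)$.
   Context: $\mathbf{i}=\sqrt{-1}$, $[k]=(q^k-q^{-k})/(q-q^{-1})$. For $m\ge1$, $a_m=\prod_{j=1}^m \mathbf{i}\,\frac{q^{j-1}+q^{1-j}}{q^j-q^{-j}}$, and for a strict partition $\lambda=(\lambda_1>\dots>\lambda_r>0)$ the rational function $q_\lambda=\prod_{j=1}^r a_{\lambda_j}\prod_{1\le i<j\le r}\frac{[\lambda_i-\lambda_j]}{[\lambda_i+\lambda_j]}$ (with $q_\emptyset=1$), evaluated at the given $q$. *)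

(* Defs.v *)
From mathcomp Require Import all_boot all_order all_algebra all_field.
Set Implicit Arguments. Unset Strict Implicit. Unset Printing Implicit Defensive.
Import Order.TTheory GRing.Theory Num.Theory.
Local Open Scope ring_scope.

Definition qint (q : algC) (k : nat) : algC :=
  (q ^+ k - q ^- k) / (q - q^-1).

Definition acoef (q : algC) (m : nat) : algC :=
  \prod_(1 <= j < m.+1)
     ('i * (q ^+ (j.-1) + q ^- (j.-1)) / (q ^+ j - q ^- j)).

Definition strict_partition (l : seq nat) : bool :=
  sorted (fun x y => y < x)%N l && all (fun x => 0 < x)%N l.

Definition qlam (q : algC) (l : seq nat) : algC :=
  (\prod_(j < size l) acoef q (nth 0%N l j)) *
  \prod_(i < size l) \prod_(j < size l | (i < j)%N)
     (qint q (nth 0%N l i - nth 0%N l j) / qint q (nth 0%N l i + nth 0%N l j)).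

(* Main.v *)
Require Import Defs.
From mathcomp Require Import all_boot all_order all_algebra all_field.
From mathcomp Require Import zify ring.
Import Order.TTheory GRing.Theory Num.Theory.
Set Implicit Arguments. Unset Strict Implicit.
Local Open Scope ring_scope.

Definition Sq (q : algC) (k : nat) : algC := q ^+ k - q ^- k.

Lemma q_neq0 N (q : algC) : (2 <= N)%N -> (4 * N)%N.-primitive_root q -> q != 0.
Proof.
move=> hN hq; apply/eqP => q0; have := prim_expr_order hq.
rewrite q0 expr0n; have -> : (4 * N == 0)%N = false by lia.
by move/eqP; rewrite eq_sym oner_eq0.
Qed.

Lemma pow1 N (q : algC) n : (4 * N)%N.-primitive_root q -> (0 < n < 4 * N)%N -> q ^+ n != 1.
Proof.
move=> hq hn; rewrite -(prim_order_dvd hq); apply/negP => /dvdn_leq; lia.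
Qed.

Lemma s_neq0 N (q : algC) k : (2 <= N)%N -> (4 * N)%N.-primitive_root q ->
  (0 < k < 2 * N)%N -> q ^+ k - q ^- k != 0.
Proof.
move=> hN hq hk; have qn := q_neq0 hN hq.
rewrite subr_eq0; apply/negP => /eqP E.
have : q ^+ (k + k) = 1 by rewrite exprD {1}E mulVf // expf_neq0.
by apply/eqP; apply: (pow1 hq); lia.
Qed.

Lemma c_neq0 N (q : algC) k : (2 <= N)%N -> (4 * N)%N.-primitive_root q -> q ^+ N = 'i ->
  (k < N)%N -> q ^+ k + q ^- k != 0.
Proof.
move=> hN hq hi hk; have qn := q_neq0 hN hq.
rewrite addr_eq0; apply/negP => /eqP E.
have e1 : q ^+ (k + k) = -1.
  by rewrite exprD {1}E mulNr mulVf ?expf_neq0.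
have e2 : q ^+ (N + N) = q ^+ (k + k) * q ^+ ((N - k) + (N - k)).
  by rewrite -exprD; congr (_ ^+ _); lia.
have e3 : q ^+ (N + N) = -1 by rewrite exprD hi mulCii.
move: e2; rewrite e3 e1 mulN1r => /eqP; rewrite eqr_opp eq_sym; apply/negP.
by apply: (pow1 hq); lia.
Qed.

Lemma qNm N (q : algC) k : (2 <= N)%N -> (4 * N)%N.-primitive_root q -> q ^+ N = 'i ->
  (k <= N)%N -> q ^+ (N - k) = 'i * q ^- k.
Proof.
move=> hN hq hi hk; have qn := q_neq0 hN hq.
have e : q ^+ N = q ^+ (N - k) * q ^+ k by rewrite -exprD subnK.
by rewrite -hi e mulfK // expf_neq0.
Qed.

Lemma sNm N (q : algC) k : (2 <= N)%N -> (4 * N)%N.-primitive_root q -> q ^+ N = 'i ->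
  (k <= N)%N -> q ^+ (N - k) - q ^- (N - k) = 'i * (q ^+ k + q ^- k).
Proof.
move=> hN hq hi hk; rewrite (qNm hN hq hi hk) invfM invCi invrK.
by rewrite mulrDr mulNr opprK addrC.
Qed.

Lemma sNp N (q : algC) k : (2 <= N)%N -> (4 * N)%N.-primitive_root q -> q ^+ N = 'i ->
  q ^+ (N + k) - q ^- (N + k) = 'i * (q ^+ k + q ^- k).
Proof.
move=> hN hq hi; rewrite exprD hi invfM invCi.
by rewrite mulrDr mulNr opprK.
Qed.

Definition Fa (q : algC) (j : nat) : algC :=
  'i * (q ^+ (j.-1) + q ^- (j.-1)) / (q ^+ j - q ^- j).

Lemma acoef0 (q : algC) : acoef q 0 = 1.
Proof. by rewrite /acoef big_geq. Qed.

Lemma acoefS (q : algC) k : acoef q k.+1 = acoef q k * Fa q k.+1.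
Proof. by rewrite /acoef big_nat_recr. Qed.

Lemma Fa_eq N (q : algC) j : (2 <= N)%N -> (4 * N)%N.-primitive_root q -> q ^+ N = 'i ->
  (1 <= j <= N)%N -> Fa q j = Sq q (N.+1 - j) / Sq q j.
Proof.
move=> hN hq hi hj; rewrite /Fa /Sq.
have -> : (N.+1 - j = N - j.-1)%N by lia.
by rewrite (sNm hN hq hi) //; lia.
Qed.

Lemma acoefN N (q : algC) : (2 <= N)%N -> (4 * N)%N.-primitive_root q -> q ^+ N = 'i ->
  acoef q N = 1.
Proof.
move=> hN hq hi; rewrite /acoef.
transitivity (\prod_(1 <= j < N.+1) (Sq q (N.+1 - j) / Sq q j)).
  apply: eq_big_nat => j hj; rewrite -(Fa_eq hN hq hi) //; lia.
rewrite big_split /= prodfV big_nat_rev /=.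
rewrite (@eq_big_nat _ _ _ 1 N.+1 _ (fun i => Sq q i)); last first.
  by move=> j hj; congr Sq; lia.
apply: divff; rewrite prodf_seq_neq0; apply/allP => j; rewrite mem_index_iota => hj.
by apply/implyP => _; apply: (s_neq0 hN hq); lia.
Qed.

Lemma partb N (q : algC) : (2 <= N)%N -> (4 * N)%N.-primitive_root q -> q ^+ N = 'i ->
  forall m : nat, (m <= N)%N -> acoef q (N - m) = acoef q m.
Proof.
move=> hN hq hi; elim => [|m IH] hm.
  by rewrite subn0 acoef0 (acoefN hN hq hi).
have e : (N - m = (N - m.+1).+1)%N by lia.
move: IH; rewrite e acoefS => /(_ (ltnW hm)) IH.
rewrite acoefS -IH -mulrA -{1}[acoef q _]mulr1; congr (_ * _).
rewrite -e (Fa_eq hN hq hi) ?(Fa_eq hN hq hi); try lia.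
have -> : (N.+1 - (N - m) = m.+1)%N by lia.
have -> : (N.+1 - m.+1 = N - m)%N by lia.
rewrite mulrA divfK ?divff //; apply: (s_neq0 hN hq); lia.
Qed.

Lemma sp_lt l i j : strict_partition l -> (i < j < size l)%N -> (nth 0 l j < nth 0 l i)%N.
Proof.
case/andP => hs _ /andP[hij hj].
apply: (sorted_ltn_nth (leT := fun x y => (y < x)%N)) => //.
  by move=> a b c hba hcb; apply: ltn_trans hcb hba.
by rewrite inE; apply: ltn_trans hj.
Qed.

Lemma sp_pos l i : strict_partition l -> (i < size l)%N -> (0 < nth 0 l i)%N.
Proof. by case/andP => _ /all_nthP; apply. Qed.

Lemma sp_head l i : strict_partition l -> (i < size l)%N -> (nth 0 l i <= head 0 l)%N.
Proof.
move=> hl hi; case: i hi => [|i] hi; first by case: l hl hi.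
rewrite -nth0; apply: ltnW; apply: sp_lt => //; lia.
Qed.

Lemma qint_neq0 N (q : algC) k : (2 <= N)%N -> (4 * N)%N.-primitive_root q ->
  (0 < k < 2 * N)%N -> qint q k != 0.
Proof.
move=> hN hq hk; rewrite /qint mulf_neq0 ?invr_neq0 ?(s_neq0 hN hq) //.
by have := s_neq0 (k := 1) hN hq; rewrite expr1; apply; lia.
Qed.

Lemma acoef_neq0 N (q : algC) m : (2 <= N)%N -> (4 * N)%N.-primitive_root q -> q ^+ N = 'i ->
  (m < N)%N -> acoef q m != 0.
Proof.
move=> hN hq hi hm; rewrite /acoef prodf_seq_neq0; apply/allP => j.
rewrite mem_index_iota => hj; apply/implyP => _.
rewrite mulf_neq0 ?invr_neq0 ?mulf_neq0 ?neq0Ci //.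
  by apply: (c_neq0 hN hq hi); lia.
by apply: (s_neq0 hN hq); lia.
Qed.

Lemma prod_split (F : nat -> nat -> algC) n :
  \prod_(i < n.+1) \prod_(j < n.+1 | (i < j)%N) F i j =
  (\prod_(j < n) F 0%N j.+1) * \prod_(i < n) \prod_(j < n | (i < j)%N) F i.+1 j.+1.
Proof.
rewrite big_ord_recl; congr (_ * _).
  rewrite big_mkcond big_ord_recl /= mul1r; apply: eq_bigr => j _.
  by rewrite /bump leq0n add1n.
apply: eq_bigr => i _; rewrite big_mkcond big_ord_recl /= mul1r [RHS]big_mkcond.
by apply: eq_bigr => j _; rewrite /bump !leq0n !add1n ltnS.
Qed.

Lemma partc N (q : algC) : (2 <= N)%N -> (4 * N)%N.-primitive_root q -> q ^+ N = 'i ->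
  forall l : seq nat, strict_partition (N :: l) -> qlam q (N :: l) = qlam q l.
Proof.
move=> hN hq hi l hl; rewrite /qlam /= big_ord_recl /=.
rewrite (prod_split (fun i j => qint q (nth 0%N (N :: l) i - nth 0%N (N :: l) j) /
   qint q (nth 0%N (N :: l) i + nth 0%N (N :: l) j))) /=.
have hN1 : acoef q N = 1 by rewrite (acoefN hN hq hi).
rewrite hN1 mul1r [X in _ * (X * _)]big1 ?mul1r.
  by congr (_ * _); apply: eq_bigr => i _; rewrite add0n.
move=> j _.
have h1 := sp_lt (i := 0) (j := j.+1) hl.
have h2 := sp_pos (i := j.+1) hl.
rewrite /= in h1 h2.
have hj := ltn_ord j.
rewrite /qint (sNm hN hq hi); last by have := h1 (ltac:(lia)); lia.
rewrite -(@sNp N q _ hN hq hi) -/(qint q (N + nth 0%N l j)) divff //.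
by apply: (qint_neq0 hN hq); have := h1 (ltac:(lia)); have := h2 (ltac:(lia)); lia.
Qed.

Theorem corollary2p28 (N : nat) (q : algC) :
  (2 <= N)%N -> (4 * N)%N.-primitive_root q -> q ^+ N = 'i ->
  [/\ (forall l : seq nat, strict_partition l -> (head 0%N l < N)%N ->
          qlam q l != 0)
    /\ (forall l : seq nat, strict_partition l -> head 0%N l = N.+1 ->
          (nth 0%N l 1 <= N - 2)%N -> qlam q l = 0),
      (forall m : nat, (m <= N)%N -> acoef q (N - m) = acoef q m)
    & (forall l : seq nat, strict_partition (N :: l) ->
          qlam q (N :: l) = qlam q l)].
Proof.
move=> hN hq hi; split; [split | exact: partb | exact: partc].
- move=> l hl hh; rewrite /qlam mulf_neq0 //.
    apply/prodf_neq0 => i _; apply: (acoef_neq0 hN hq hi).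
    by have := sp_head hl (ltn_ord i); lia.
  apply/prodf_neq0 => i _; apply/prodf_neq0 => j hij.
  have hi' := ltn_ord i; have hj := ltn_ord j.
  have h1 := sp_head hl hi'; have h2 := sp_pos hl hj.
  have h3 := sp_lt (i := i) (j := j) hl (ltac:(lia)).
  rewrite mulf_neq0 ?invr_neq0 //; apply: (qint_neq0 hN hq); lia.
- case=> [|x l] hl //= hx _; rewrite /qlam /= big_ord_recl /= hx.
  rewrite acoefS /Fa /= hi invCi subrr mulr0 mul0r mulr0.
  by rewrite !mul0r.
Qed.
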